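(* The family $\mathcal S$ of SIP sets is not a filterdual; that is, there exist sets $A_1,A_2\subset\mathbb N$ such that $A_1\cup A_2$ is an SIP set but neither $A_1$ nor $A_2$ is an SIP set.
   Context: $\mathbb N=\{1,2,\dots\}$. For a finite set $F\subset\mathbb Z$, $\sigma_F$ is the sum of its elements ($\sigma_\emptyset=0$). For $A\subset\mathbb Z$: $IP(A)=\{\sigma_F:F\subset A\text{ finite}\}$ and $SIP(A)=\{a-b:a,b\in IP(A)\}$. A set $B\subset\mathbb N$ is an SIP set if there exists an infinite $A\subset\mathbb N$ with $SIP(A)\cap\mathbb N\subset B$. A family $\mathcal F$ of subsets of $\mathbb N$ (closed under taking supersets) is a filterdual if $A_1\cup A_2\in\mathcal F$ implies $A_1\in\mathcal F$ or $A_2\in\mathcal F$. *)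

(* Defs.v *)
(* Subsets of Z (and of N = {1,2,...} viewed inside Z) are predicates Z -> Prop. *)
From Stdlib Require Import ZArith List.
Import ListNotations.
Open Scope Z_scope.

Definition subset_N (B : Z -> Prop) : Prop := forall x, B x -> 0 < x.

(* sigma_F for a finite set F given by a duplicate-free list *)
Definition sigma (F : list Z) : Z := fold_right Z.add 0 F.

(* IP(A) = { sigma_F : F subset A finite } (F = empty allowed, giving 0) *)
Definition IP (A : Z -> Prop) (x : Z) : Prop :=
  exists F : list Z, NoDup F /\ (forall y, In y F -> A y) /\ x = sigma F.

Definition SIP (A : Z -> Prop) (x : Z) : Prop :=
  exists a b, IP A a /\ IP A b /\ x = a - b.

Definition infinite_set (A : Z -> Prop) : Prop :=
  forall n : Z, exists x, A x /\ n < x.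

Definition SIP_set (B : Z -> Prop) : Prop :=
  exists A : Z -> Prop, subset_N A /\ infinite_set A /\
    (forall x, SIP A x -> 0 < x -> B x).

(* Main.v *)
Require Import Defs.
From Stdlib Require Import ZArith List Lia Arith.
Import ListNotations.
Open Scope Z_scope.
Ltac zlia := Z.div_mod_to_equations; lia.

Fixpoint col (p:positive) : bool := match p with
 | xO q => negb (col q)
 | xI (xO _) => false
 | xI _ => true
 | xH => false end.

Definition colZ (n:Z) : bool := match n with Zpos p => col p | _ => false end.

Definition Cls (b:bool) (n:Z) : Prop := 0 < n /\ colZ n = b.

Lemma col_odd : forall m, 0 < m -> m mod 2 = 1 -> colZ m = (m mod 4 =? 3).
Proof.
  intros m Hm Ho. destruct m as [|p|p]; try zlia.
  destruct p as [r|r|].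
  - destruct r as [s|s|]; simpl.
    + assert (H: Z.pos s~1~1 mod 4 = 3) by (rewrite !Pos2Z.inj_xI; zlia). rewrite H; reflexivity.
    + assert (H: Z.pos s~0~1 mod 4 = 1) by (rewrite Pos2Z.inj_xI, Pos2Z.inj_xO; zlia). rewrite H; reflexivity.
    + reflexivity.
  - rewrite Pos2Z.inj_xO in Ho. zlia.
  - reflexivity.
Qed.

Lemma colZ_double : forall n, 0 < n -> colZ (2*n) = negb (colZ n).
Proof. intros n H. destruct n; try zlia. reflexivity. Qed.

Lemma col_spec : forall v m, 0 < m -> m mod 2 = 1 ->
  colZ (2^Z.of_nat v * m) = xorb (Nat.odd v) (m mod 4 =? 3).
Proof.
  induction v; intros m Hm Ho.
  - simpl Z.of_nat; rewrite Z.pow_0_r, Z.mul_1_l; simpl Nat.odd. apply col_odd; auto.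
  - rewrite Nat2Z.inj_succ, Z.pow_succ_r by zlia. rewrite <- Z.mul_assoc.
    rewrite colZ_double.
    + rewrite IHv by auto. rewrite Nat.odd_succ, <- Nat.negb_odd.
      destruct (Nat.odd v), (m mod 4 =? 3); reflexivity.
    + assert (0 < 2 ^ Z.of_nat v) by (apply Z.pow_pos_nonneg; zlia). nia.
Qed.

Lemma decomp : forall n, 0 < n -> exists v m, 0 < m /\ m mod 2 = 1 /\ n = 2^Z.of_nat v * m.
Proof.
  intros n Hn. destruct n as [|p|p]; try zlia. clear Hn. induction p.
  - exists 0%nat, (Z.pos p~1). rewrite Pos2Z.inj_xI. simpl. zlia.
  - destruct IHp as [v [m [H1 [H2 H3]]]]. exists (S v), m.
    split; [auto|split; [auto|]]. rewrite Nat2Z.inj_succ, Z.pow_succ_r by lia. change (Z.pos p~0) with (2 * Z.pos p).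
    rewrite H3. ring.
  - exists 0%nat, 1. simpl. zlia.
Qed.

Lemma pow_add : forall a b, 2^Z.of_nat (a+b) = 2^Z.of_nat a * 2^Z.of_nat b.
Proof. intros. rewrite Nat2Z.inj_add. apply Z.pow_add_r; zlia. Qed.

Lemma pos_pow : forall a, 0 < 2^Z.of_nat a.
Proof. intros. apply Z.pow_pos_nonneg; zlia. Qed.

Lemma pair_step : forall b x y vx px vy py,
  0 < px -> px mod 2 = 1 -> x = 2^Z.of_nat vx * px ->
  0 < py -> py mod 2 = 1 -> y = 2^Z.of_nat vy * py ->
  x < y -> colZ x = b -> colZ y = b -> colZ (x+y) = b -> colZ (y-x) = b ->
  (vy <= vx)%nat /\ (vy = vx -> (px - py) mod 8 = 4).
Proof.
  intros b x y vx px vy py Hpx Ox Ex Hpy Oy Ey Hlt Cx Cy Cs Cd.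
  rewrite Ex in Cx; rewrite col_spec in Cx by auto.
  rewrite Ey in Cy; rewrite col_spec in Cy by auto.
  assert (Px := pos_pow vx). assert (Py := pos_pow vy).
  destruct (le_lt_dec (vx+2) vy) as [H|H].
  - exfalso. set (d := (vy - (vx+2))%nat). assert (Hd : vy = ((vx + 2) + d)%nat) by zlia.
    set (K := 2^Z.of_nat d * py).
    assert (HK : y = 2^Z.of_nat vx * (4*K)).
    { rewrite Ey, Hd, pow_add, pow_add. unfold K. change (2 ^ Z.of_nat 2) with 4. ring. }
    assert (HD : y - x = 2^Z.of_nat vx * (4*K - px)) by (rewrite HK, Ex; ring).
    assert (0 < 4*K - px) by nia.
    rewrite HD, col_spec in Cd by (auto; zlia).
    destruct (Z.eqb_spec (px mod 4) 3), (Z.eqb_spec ((4*K-px) mod 4) 3); try zlia;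
    destruct (Nat.odd vx); simpl in *; congruence.
  - destruct (Nat.eq_dec vy (vx+1)) as [H1|H1].
    { exfalso. assert (HS : x + y = 2^Z.of_nat vx * (px + 2*py)).
      { rewrite Ex, Ey, H1, pow_add. change (2 ^ Z.of_nat 1) with 2. ring. }
      rewrite HS, col_spec in Cs by (auto; zlia).
      destruct (Z.eqb_spec (px mod 4) 3), (Z.eqb_spec ((px+2*py) mod 4) 3); try zlia;
      destruct (Nat.odd vx); simpl in *; congruence. }
    destruct (Nat.eq_dec vx (vy+1)) as [H2|H2].
    { exfalso. assert (HS : x + y = 2^Z.of_nat vy * (py + 2*px)).
      { rewrite Ex, Ey, H2, pow_add. change (2 ^ Z.of_nat 1) with 2. ring. }
      rewrite HS, col_spec in Cs by (auto; zlia).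
      destruct (Z.eqb_spec (py mod 4) 3), (Z.eqb_spec ((py+2*px) mod 4) 3); try zlia;
      destruct (Nat.odd vy); simpl in *; congruence. }
    destruct (Nat.eq_dec vx vy) as [H3|H3].
    + subst vy. split; [zlia|]. intros _.
      destruct (Z.eq_dec (px mod 4) (py mod 4)) as [H4|H4].
      * destruct (Z.eq_dec ((px - py) mod 8) 0) as [H5|H5]; [|zlia].
        exfalso. set (m := (px+py)/2).
        assert (Hm : px + py = 2*m) by (unfold m; zlia).
        assert (HS : x + y = 2^Z.of_nat (S vx) * m).
        { rewrite Ex, Ey, Nat2Z.inj_succ, Z.pow_succ_r by zlia. nia. }
        rewrite HS, col_spec in Cs by zlia.
        rewrite Nat.odd_succ, <- Nat.negb_odd in Cs.
        destruct (Z.eqb_spec (px mod 4) 3), (Z.eqb_spec (m mod 4) 3); try zlia;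
        destruct (Nat.odd vx); simpl in *; congruence.
      * exfalso.
        destruct (Z.eqb_spec (px mod 4) 3), (Z.eqb_spec (py mod 4) 3); try zlia;
        destruct (Nat.odd vx); simpl in *; congruence.
    + split; [zlia|]. intro; zlia.
Qed.

Lemma SIP_one : forall A x, A x -> SIP A x.
Proof.
  intros A x H. exists x, 0. split; [|split].
  - exists [x]. split; [constructor; [simpl; tauto|constructor]|].
    split; [simpl; intros y [<-|[]]; auto|simpl; zlia].
  - exists []. split; [constructor|]. split; [simpl; tauto|reflexivity].
  - zlia.
Qed.

Lemma SIP_sum : forall A x y, A x -> A y -> x <> y -> SIP A (x+y).
Proof.
  intros A x y Hx Hy Hxy. exists (x+y), 0. split; [|split].
  - exists [x;y]. split.
    + constructor; [simpl; intros [H|[]]; congruence|constructor; [simpl; tauto|constructor]].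
    + split; [simpl; intros z [<-|[<-|[]]]; auto|simpl; zlia].
  - exists []. split; [constructor|]. split; [simpl; tauto|reflexivity].
  - zlia.
Qed.

Lemma SIP_diff : forall A x y, A x -> A y -> SIP A (y-x).
Proof.
  intros A x y Hx Hy. exists y, x. split; [|split].
  - exists [y]. split; [constructor; [simpl; tauto|constructor]|].
    split; [simpl; intros z [<-|[]]; auto|simpl; zlia].
  - exists [x]. split; [constructor; [simpl; tauto|constructor]|].
    split; [simpl; intros z [<-|[]]; auto|simpl; zlia].
  - reflexivity.
Qed.

Lemma no_mono : forall b A, subset_N A -> infinite_set A ->
  (forall x, SIP A x -> 0 < x -> Cls b x) -> False.
Proof.
  intros b A HN Hinf H.
  assert (Pair : forall x y vx px vy py, A x -> A y ->
    0 < px -> px mod 2 = 1 -> x = 2^Z.of_nat vx * px ->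
    0 < py -> py mod 2 = 1 -> y = 2^Z.of_nat vy * py -> x < y ->
    (vy <= vx)%nat /\ (vy = vx -> (px - py) mod 8 = 4)).
  { intros x y vx px vy py Ax Ay H1 H2 H3 H4 H5 H6 Hlt.
    pose proof (HN x Ax). pose proof (HN y Ay).
    eapply (pair_step b x y); eauto.
    - apply H; [apply SIP_one; auto|zlia].
    - apply H; [apply SIP_one; auto|zlia].
    - apply H; [apply SIP_sum; auto; zlia|zlia].
    - apply H; [apply SIP_diff; auto|zlia]. }
  assert (Main : forall n x v p, A x -> 0 < p -> p mod 2 = 1 -> x = 2^Z.of_nat v * p ->
    (v < n)%nat -> False).
  { induction n; intros x v p Ax Hp Op Ex Hv; [zlia|].
    destruct (Hinf x) as [y [Ay Hxy]].
    destruct (decomp y (HN y Ay)) as [vy [py [Hpy [Oy Ey]]]].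
    destruct (Pair x y v p vy py Ax Ay Hp Op Ex Hpy Oy Ey Hxy) as [L1 L2].
    destruct (Nat.eq_dec vy v) as [E1|E1].
    2: { apply (IHn y vy py); auto; zlia. }
    destruct (Hinf y) as [z [Az Hyz]].
    destruct (decomp z (HN z Az)) as [vz [pz [Hpz [Oz Ez]]]].
    destruct (Pair y z vy py vz pz Ay Az Hpy Oy Ey Hpz Oz Ez Hyz) as [M1 M2].
    destruct (Nat.eq_dec vz vy) as [E2|E2].
    2: { apply (IHn z vz pz); auto; zlia. }
    destruct (Pair x z v p vz pz Ax Az Hp Op Ex Hpz Oz Ez ltac:(zlia)) as [N1 N2].
    specialize (L2 E1). specialize (M2 E2). specialize (N2 ltac:(zlia)). zlia. }
  destruct (Hinf 0) as [x [Ax Hx]].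
  destruct (decomp x Hx) as [v [p [Hp [Op Ex]]]].
  apply (Main (S v) x v p); auto.
Qed.

Theorem theorem3p5 :
  exists A1 A2 : Z -> Prop,
    subset_N A1 /\ subset_N A2 /\
    SIP_set (fun x => A1 x \/ A2 x) /\ ~ SIP_set A1 /\ ~ SIP_set A2.
Proof.
  exists (Cls false), (Cls true).
  split; [intros x [H _]; auto|].
  split; [intros x [H _]; auto|].
  split.
  - exists (fun x => 0 < x). split; [intros x H; auto|]. split.
    + intros n. exists (Z.abs n + 1). zlia.
    + intros x _ Hx. destruct (colZ x) eqn:E; [right|left]; split; auto.
  - split; intros [A [HN [Hinf H]]]; eapply no_mono; eauto.
Qed.
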